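(* Let $\mathcal{F}$ be a finite family of closed intervals on a line and let $G$ be its intersection graph. Then $\chi_{CF}^{cn}(G)\le 3$.
   Context: The intersection graph of $\mathcal{F}$ has vertex set $\mathcal{F}$, with distinct $s_1,s_2$ adjacent iff $s_1\cap s_2\neq\emptyset$. $\chi_{CF}^{cn}(G)$ is the minimum number of colors in a coloring of $V(G)$ such that for every vertex $v$, the closed neighborhood $N_G[v]=\{v\}\cup\{u:\{u,v\}\in E(G)\}$ contains a vertex whose color differs from the colors of all other vertices of $N_G[v]$. *)

(* Defs.v *)
From HB Require Import structures.
From mathcomp Require Import all_boot all_order all_algebra.
From Stdlib Require Import ClassicalEpsilon.
Set Implicit Arguments. Unset Strict Implicit. Unset Printing Implicit Defensive.
Import Order.TTheory GRing.Theory Num.Theory.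
Local Open Scope ring_scope.

Definition cinterval (R : realFieldType) (a b : R) : pred R :=
  fun x => (a <= x) && (x <= b).

Definition meets (R : realFieldType) (I J : pred R) : Prop :=
  exists x : R, x \in I /\ x \in J.

Definition interval_adj (R : realFieldType) (n : nat) (a b : 'I_n -> R)
  (i j : 'I_n) : Prop :=
  i <> j /\ meets (cinterval (a i) (b i)) (cinterval (a j) (b j)).

Definition closed_nbhd (T : finType) (adj : T -> T -> Prop) (v u : T) : Prop :=
  u = v \/ adj u v \/ adj v u.

Definition cf_cn_coloring (T : finType) (adj : T -> T -> Prop) (C : Type)
  (c : T -> C) : Prop :=
  forall v : T, exists u : T, closed_nbhd adj v u /\
    forall w : T, closed_nbhd adj v w -> w <> u -> c w <> c u.

Definition cf_cn_colorable (T : finType) (adj : T -> T -> Prop) (k : nat) : Prop :=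
  exists c : T -> 'I_k, cf_cn_coloring adj c.

Definition asbool (P : Prop) : bool :=
  if excluded_middle_informative P then true else false.

Lemma cf_cn_colorable_exists (T : finType) (adj : T -> T -> Prop) :
  exists k, asbool (cf_cn_colorable adj k).
Proof.
exists #|T|; rewrite /asbool; case: excluded_middle_informative => // [[]].
exists (@enum_rank T) => v; exists v; split; first by left.
by move=> w _ Hw /enum_rank_inj.
Qed.

Definition chi_cf_cn (T : finType) (adj : T -> T -> Prop) : nat :=
  ex_minn (@cf_cn_colorable_exists T adj).

(* Main.v *)
Require Import Defs.
From HB Require Import structures.
From mathcomp Require Import all_boot all_order all_algebra.
From Stdlib Require Import ClassicalEpsilon.
Import Order.TTheory GRing.Theory Num.Theory.
Local Open Scope ring_scope.
Set Implicit Arguments. Unset Strict Implicit. Unset Printing Implicit Defensive.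

Lemma ex_minR (R : realFieldType) (T : finType) (P : pred T) (f : T -> R) (x0 : T) :
  P x0 -> exists i, P i /\ forall j, P j -> f i <= f j.
Proof. move=> Px0; case: (arg_minP f Px0) => i Pi H; by exists i. Qed.

Lemma ex_maxR (R : realFieldType) (T : finType) (P : pred T) (f : T -> R) (x0 : T) :
  P x0 -> exists i, P i /\ forall j, P j -> f j <= f i.
Proof. move=> Px0; case: (arg_maxP f Px0) => i Pi H; by exists i. Qed.

Lemma inciE (R : realFieldType) (a b x : R) : (x \in cinterval a b) = (a <= x) && (x <= b).
Proof. by []. Qed.

Lemma meetsE (R : realFieldType) (a1 b1 a2 b2 : R) : a1 <= b1 -> a2 <= b2 ->
  meets (cinterval a1 b1) (cinterval a2 b2) <-> (a1 <= b2 /\ a2 <= b1).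
Proof.
move=> h1 h2; split.
  case=> x []; rewrite !inciE => /andP[h3 h4] /andP[h5 h6].
  split; [exact: le_trans h3 h6 | exact: le_trans h5 h4].
case=> h3 h4; exists (Num.max a1 a2); rewrite !inciE.
rewrite !ge_max !le_max h1 h3 h4 h2 /=.
by split; apply/andP; split => //; apply/orP; [left|right].
Qed.

Fixpoint good (R : realFieldType) (n : nat) (a b : 'I_n -> R) (r : R) (L : seq 'I_n) : Prop :=
  match L with
  | [::] => forall v, ~ (r < a v)
  | J :: L' => (exists p, [/\ r < p, a J <= p, p <= b J,
                 (forall i, a i <= p -> b i <= b J) & (forall v, r < a v -> p <= b v)])
               /\ good a b (b J) L'
  end.

Lemma good_ex (R : realFieldType) (n : nat) (a b : 'I_n -> R) :
  (forall i, a i <= b i) ->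
  forall (N : nat) (r : R), (#|[set i | (r < a i)%R]| <= N)%N -> exists L, good a b r L.
Proof.
move=> hab; elim=> [|N IH] r hN.
  exists [::] => v hv.
  move: hN; rewrite leqn0 cards_eq0 => /eqP hE.
  have : v \in [set i | (r < a i)%R] by rewrite inE.
  by rewrite hE inE.
case: (pickP (fun i : 'I_n => r < a i)) => [i0 hi0|none]; last first.
  by exists [::] => v hv; rewrite none in hv.
have [im [Pim Hmin]] := @ex_minR _ _ (fun i : 'I_n => r < a i) b i0 hi0.
set p := b im.
have Qim : a im <= p by exact: hab.
have [J [QJ HJ]] := @ex_maxR _ _ (fun i : 'I_n => a i <= p) b im Qim.
have rp : r < p by exact: lt_le_trans Pim (hab im).
have pJ : p <= b J by exact: HJ.
have hprop : [set i | (b J < a i)%R] \proper [set i | (r < a i)%R].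
  apply/properP; split.
    apply/subsetP => i; rewrite !inE => h.
    exact: lt_trans (lt_le_trans rp pJ) h.
  exists im; rewrite !inE //.
  by rewrite -leNgt (le_trans (hab im)).
have [L' HL'] : exists L', good a b (b J) L'.
  apply: (IH (b J)); rewrite -ltnS; apply: leq_trans hN.
  exact: proper_card.
exists (J :: L'); split => //; exists p; split => //.
Qed.

Definition ovb (R : realFieldType) (n : nat) (a b : 'I_n -> R) (i j : 'I_n) : bool :=
  (a i <= b j) && (a j <= b i).

Lemma ovbC (R : realFieldType) (n : nat) (a b : 'I_n -> R) i j : ovb a b i j = ovb a b j i.
Proof. by rewrite /ovb andbC. Qed.

Lemma good_cover (R : realFieldType) (n : nat) (a b : 'I_n -> R) (x0 : 'I_n) :
  (forall i, a i <= b i) -> forall L r v, good a b r L -> r < a v ->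
  exists k, (k < size L)%N && ovb a b v (nth x0 L k).
Proof.
move=> hab; elim=> [|J L IH] r v /=.
  by move=> H hv; case: (H v hv).
move=> [[p [rp aJp pbJ Hmax Hmin]] HL] hv.
case: (leP (a v) (b J)) => h.
  exists 0%N; rewrite /= /ovb h /=.
  exact: le_trans aJp (Hmin v hv).
have [k /andP[hk hov]] := IH _ v HL h.
by exists k.+1; rewrite /= ltnS hk.
Qed.

Lemma good_drop (R : realFieldType) (n : nat) (a b : 'I_n -> R) :
  forall L r i, good a b r L -> (i < size L)%N -> exists r', good a b r' (drop i L).
Proof.
elim=> [|J L IH] r [|i] //= H hi; first by exists r.
case: H => _ HL; exact: IH HL hi.
Qed.

Lemma good_loc2 (R : realFieldType) (n : nat) (a b : 'I_n -> R) r J J1 L :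
  good a b r [:: J, J1 & L] ->
  b J < b J1 /\ (forall x, a x <= b J -> b x <= b J1).
Proof.
move=> /= [_ [[p1 [h1 h2 h3 h4 h5]] _]]; split.
  exact: lt_le_trans h1 h3.
move=> x hx; apply: h4; exact: le_trans hx (ltW h1).
Qed.

Lemma good_loc3 (R : realFieldType) (n : nat) (a b : 'I_n -> R) r J J1 J2 L :
  good a b r [:: J, J1, J2 & L] ->
  a J1 < a J2 /\ b J < a J2.
Proof.
move=> /= [_ [[p1 [h1 h2 h3 h4 h5]] [[p2 [g1 g2 g3 g4 g5]] _]]].
have hp : p1 < a J2.
  rewrite ltNge; apply/negP => hle.
  have := h4 _ hle => hb.
  have := lt_le_trans g1 g3.
  by rewrite ltNge hb.
split; [exact: le_lt_trans h2 hp | exact: lt_trans h1 hp].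
Qed.

Lemma good_nth2 (R : realFieldType) (n : nat) (a b : 'I_n -> R) (x0 : 'I_n) r L i :
  good a b r L -> (i.+1 < size L)%N ->
  b (nth x0 L i) < b (nth x0 L i.+1) /\
  (forall x, a x <= b (nth x0 L i) -> b x <= b (nth x0 L i.+1)).
Proof.
move=> H hi.
have [r' H'] := good_drop H (ltnW hi).
rewrite (drop_nth x0 (ltnW hi)) (drop_nth x0 hi) in H'.
exact: good_loc2 H'.
Qed.

Lemma good_nth3 (R : realFieldType) (n : nat) (a b : 'I_n -> R) (x0 : 'I_n) r L i :
  good a b r L -> (i.+2 < size L)%N ->
  a (nth x0 L i.+1) < a (nth x0 L i.+2) /\ b (nth x0 L i) < a (nth x0 L i.+2).
Proof.
move=> H hi.
have hi1 : (i.+1 < size L)%N by exact: ltnW.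
have hi0 : (i < size L)%N by exact: ltnW.
have [r' H'] := good_drop H hi0.
rewrite (drop_nth x0 hi0) (drop_nth x0 hi1) (drop_nth x0 hi) in H'.
exact: good_loc3 H'.
Qed.

Lemma good_mono (R : realFieldType) (n : nat) (a b : 'I_n -> R) (x0 : 'I_n) r L i j :
  good a b r L -> (i <= j)%N -> (j < size L)%N -> b (nth x0 L i) <= b (nth x0 L j).
Proof.
move=> H; elim: j => [|j IH].
  by rewrite leqn0 => /eqP ->.
rewrite leq_eqVlt => /orP[/eqP -> //|hij] hj.
apply: le_trans (IH hij (ltnW hj)) _.
exact: ltW (good_nth2 x0 H hj).1.
Qed.

Lemma good_b (R : realFieldType) (n : nat) (a b : 'I_n -> R) :
  forall L r, good a b r L -> forall x, x \in L -> r < b x.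
Proof.
elim=> [|J L IH] r //= [[p [h1 h2 h3 h4 h5]] HL] x.
rewrite inE => /orP[/eqP -> |hx]; first exact: lt_le_trans h1 h3.
apply: lt_trans (IH _ HL x hx).
exact: lt_le_trans h1 h3.
Qed.

Lemma good_uniq (R : realFieldType) (n : nat) (a b : 'I_n -> R) :
  forall L r, good a b r L -> uniq L.
Proof.
elim=> [|J L IH] r //= [hJ HL]; rewrite (IH _ HL) andbT.
apply/negP => hin; have := good_b HL hin.
by rewrite ltxx.
Qed.

From mathcomp Require Import zify.

Lemma good_F2 (R : realFieldType) (n : nat) (a b : 'I_n -> R) (x0 : 'I_n) r L v k j :
  good a b r L -> ovb a b v (nth x0 L k) -> (k + 3 <= j)%N -> (j < size L)%N ->
  ~~ ovb a b v (nth x0 L j).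
Proof.
move=> H /andP[h1 _] hkj hj.
have [i hji] : exists i, j = i.+2 by exists (j - 2)%N; lia.
subst j.
have hk1 : (k.+1 < size L)%N by lia.
have hbv := (good_nth2 x0 H hk1).2 _ h1.
have [_ hgap] := good_nth3 x0 H hj.
have hm : b (nth x0 L k.+1) <= b (nth x0 L i).
  apply: good_mono H _ _; lia.
rewrite /ovb negb_and; apply/orP; right.
rewrite -ltNge; apply: le_lt_trans hbv _; exact: le_lt_trans hm hgap.
Qed.

Lemma good_F3 (R : realFieldType) (n : nat) (a b : 'I_n -> R) (x0 : 'I_n) r L v k :
  good a b r L -> ovb a b v (nth x0 L k) -> ovb a b v (nth x0 L k.+2) ->
  (k.+2 < size L)%N -> ovb a b v (nth x0 L k.+1).
Proof.
move=> H /andP[h1 _] /andP[_ h2] hk.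
have [hlt _] := good_nth2 x0 H (ltnW hk).
have [hA _] := good_nth3 x0 H hk.
rewrite /ovb (le_trans h1 (ltW hlt)) /=.
exact: le_trans (ltW hA) h2.
Qed.

Definition colf (n : nat) (L : seq 'I_n) (i : 'I_n) : 'I_3 :=
  inord (if i \in L then (index i L %% 2).+1 else 0)%N.

Lemma colf_val (n : nat) (L : seq 'I_n) (i : 'I_n) :
  nat_of_ord (colf L i) = (if i \in L then (index i L %% 2).+1 else 0)%N.
Proof.
rewrite /colf inordK //; case: ifP => // _.
by rewrite ltnS; have := ltn_pmod (index i L) (isT : (0 < 2)%N); lia.
Qed.

Lemma cf_from (R : realFieldType) (n : nat) (a b : 'I_n -> R) (x0 : 'I_n)
  (hab : forall i, a i <= b i) L v ku :
  uniq L -> (ku < size L)%N -> ovb a b v (nth x0 L ku) ->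
  (forall j, (j < size L)%N -> ovb a b v (nth x0 L j) -> (j %% 2 = ku %% 2)%N -> j = ku) ->
  exists u, closed_nbhd (@interval_adj R n a b) v u /\
    forall w, closed_nbhd (@interval_adj R n a b) v w -> w <> u -> colf L w <> colf L u.
Proof.
move=> Lu hku hov Q; exists (nth x0 L ku); split.
  case: (eqVneq (nth x0 L ku) v) => [e|ne]; first by left.
  right; right; split; first by move=> e; rewrite e eqxx in ne.
  apply/(meetsE (hab v) (hab _)); move/andP: hov => [h1 h2]; by split.
move=> w hw hne hc.
have hvw : ovb a b v w.
  case: hw => [->|[[_ hm]|[_ hm]]].
  - by rewrite /ovb hab.
  - rewrite ovbC; apply/andP; exact/(meetsE (hab w) (hab v)).
  - apply/andP; exact/(meetsE (hab v) (hab w)).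
have := congr1 (@nat_of_ord 3) hc; rewrite !colf_val mem_nth // index_uniq //.
case: ifP => // win [] hpar.
have hj : (index w L < size L)%N by rewrite index_mem.
have hn : ovb a b v (nth x0 L (index w L)) by rewrite nth_index.
have e := Q _ hj hn hpar.
by apply: hne; rewrite -e nth_index.
Qed.

Theorem lemmaA1 (R : realFieldType) (n : nat) (a b : 'I_n -> R)
  (hab : forall i, a i <= b i)
  (hdistinct : forall i j, a i = a j -> b i = b j -> i = j) :
  (chi_cf_cn (@interval_adj R n a b) <= 3)%N.
Proof.
rewrite /chi_cf_cn; case: ex_minnP => m _ Hmin; apply: Hmin.
rewrite /asbool; case: excluded_middle_informative => // [[]].
case: (pickP (fun _ : 'I_n => true)) => [x0 _|none]; last first.
  by exists (fun _ => ord0) => v; have := none v.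
have [im [_ Him]] := @ex_minR _ _ predT a x0 isT.
have hr0 : forall v, a im - 1 < a v.
  move=> v; apply: lt_le_trans (Him v isT).
  by rewrite ltrBlDr ltrDl ltr01.
have [L HL] := good_ex hab (leqnn #|[set i | (a im - 1 < a i)%R]|).
have Lu := good_uniq HL.
exists (colf L) => v.
have [k0 hk0] := good_cover x0 hab HL (hr0 v).
case: (ex_minnP (ex_intro (fun k => (k < size L)%N && ovb a b v (nth x0 L k)) k0 hk0)).
move=> k /andP[hk hov] kmin.
case hk1: ((k.+1 < size L)%N && ovb a b v (nth x0 L k.+1)).
  move/andP: hk1 => [hk1 hov1].
  apply: (cf_from hab Lu hk1 hov1) => j hj hovj hpar.
  have hkj : (k <= j)%N by apply: kmin; rewrite hj hovj.
  apply/eqP; apply/negP => /eqP hne.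
  have h3 : (k + 3 <= j)%N by lia.
  by have := good_F2 HL hov h3 hj; rewrite hovj.
apply: (cf_from hab Lu hk hov) => j hj hovj hpar.
have hkj : (k <= j)%N by apply: kmin; rewrite hj hovj.
apply/eqP; apply/negP => /eqP hne.
have [e2|ne2] := eqVneq j k.+2.
  subst j.
  have h1 : (k.+1 < size L)%N by exact: ltnW hj.
  by move: hk1; rewrite h1 (good_F3 HL hov hovj hj).
have h3 : (k + 3 <= j)%N by lia.
by have := good_F2 HL hov h3 hj; rewrite hovj.
Qed.
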